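(* Consider the single-input control-affine system $\dot{x} = f(x) + g(x)u$ and a Lipschitz continuous exponential CBF $h$ with relative degree $r<n$ and rates $\gamma_1,\dots,\gamma_r>0$, $\gamma_{\min}=\min_i\gamma_i$, written in cascading constraint coordinates as $\dot{\varphi} = A_\gamma \varphi + B\mu$, $\dot{\eta} = q_{\mathrm{cbf}}(\eta,\varphi)$, where $l_\varphi$ denotes the Lipschitz constant of $q_{\mathrm{cbf}}$ with respect to $\varphi$. Let $x_0\in S_\varphi$. Suppose the positive-feedback-stabilizable global exponential minimum phase condition holds: there is a Lipschitz feedback $\kappa_{\mathrm{ps}}:\mathbb{R}^{n-r}\to\mathbb{R}_{\ge0}$ such that $\dot\eta=q_{\mathrm{cbf}}(\eta,\Gamma\kappa_{\mathrm{ps}}(\eta))$ has a globally exponentially stable equilibrium $\eta_e$. Let $V$ be a (converse) Lyapunov function with constants $\alpha_1,\alpha_2,\alpha_3,\alpha_4>0$ such that $\alpha_1|\eta-\eta_e|^2\le V(\eta)\le\alpha_2|\eta-\eta_e|^2$, $|\partial V/\partial\eta|\le\alpha_3|\eta-\eta_e|$, and $\frac{\partial V}{\partial\eta}\cdot q_{\mathrm{cbf}}(\eta,\Gamma\kappa_{\mathrm{ps}}(\eta))\le-\alpha_4|\eta-\eta_e|^2$. If $\alpha_4>\left(\frac{\alpha_3 l_\varphi}{2}\right)^2$ and $\gamma_{\min}$ is large enough, then the system under the barrier constraint can stay bounded; in particular, setting $\mu(t)=\kappa_{\mathrm{ps}}(\eta(t))$ (which satisfies $\mu\ge0$), the trajectory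 satisfies $(\varphi(t),\eta(t))\to(\Gamma\kappa_{\mathrm{ps}}(\eta_e),\eta_e)$ and thus stays bounded.
   Context: The system $\dot x = f(x)+g(x)u$ has $f,g:\mathbb{R}^n\to\mathbb{R}^n$ Lipschitz and $u\in\mathbb{R}$. $L_f$, $L_g$ denote Lie derivatives. $h$ has relative degree $r$ at $x$ if $L_gL_f^k h\equiv 0$ near $x$ for $k=0,\dots,r-2$ and $L_gL_f^{r-1}h(x)\neq 0$. An exponential CBF with relative degree $r$ is $h:\mathbb{R}^n\to\mathbb{R}$ with relative degree $r$ on $\mathcal{C}=\{h\ge 0\}$, $\partial h/\partial x\neq0$ on $\{h=0\}$, and $\sup_{u}[L_f^r h(x)+L_gL_f^{r-1}h(x)u+k^\top\xi(x)]\ge 0$ on $\mathcal{C}$, where $\xi=[h,L_fh,\dots,L_f^{r-1}h]^\top$ and $s^r+k_rs^{r-1}+\dots+k_1=(s+\gamma_1)\cdots(s+\gamma_r)$, $\gamma_i>0$. Virtual control input: $\mu(x,u)=L_f^rh+L_gL_f^{r-1}h\,u+k^\top\xi$; barrier constraint: $\mu\ge0$. Cascading constraint vector: $\varphi_1=h$, $\varphi_{i+1}=\dot\varphi_i+\gamma_i\varphi_i$; $S_\varphi=\{x:\varphi(x)\in\mathbb{R}^r_{\ge0}\}$. $A_\gamma$ is the $r\times r$ upper bidiagonal matrix with diagonal $-\gamma_1,\dots,-\gamma_r$ and superdiagonal entries $1$; $B=[0,\dots,0,1]^\top$; $\Gamma=-A_\gamma^{-1}B=[(\gamma_1\cdots\gamma_r)^{-1},(\gamma_2\cdots\gamma_r)^{-1},\dots,\gamma_r^{-1}]^\top$.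 The internal state $\eta\in\mathbb{R}^{n-r}$ is chosen so that $x\mapsto(\varphi,\eta)$ is a diffeomorphism and $L_g\eta_j\equiv 0$; then $\dot\varphi=A_\gamma\varphi+B\mu$, $\dot\eta=q_{\mathrm{cbf}}(\eta,\varphi)$ with $q_{\mathrm{cbf}}$ Lipschitz in $\eta$ and $\varphi$. Any signal $\mu(t)$ can be realized by a choice of $u$. *)

(* Defs.v *)
From HB Require Import structures.
From mathcomp Require Import all_boot all_order all_algebra.
From mathcomp Require Import all_classical all_reals all_analysis.
Set Implicit Arguments. Unset Strict Implicit. Unset Printing Implicit Defensive.
Import Order.TTheory GRing.Theory Num.Theory.
Import numFieldNormedType.Exports.
Local Open Scope ring_scope.

Definition edot (R : realType) (k : nat) (u v : 'cV[R]_k) : R :=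
  \sum_(i < k) u i 0 * v i 0.
Definition enorm (R : realType) (k : nat) (v : 'cV[R]_k) : R :=
  Num.sqrt (\sum_(i < k) v i 0 ^+ 2).

Definition Agam (R : realType) (r : nat) (gam : 'I_r -> R) : 'M[R]_r :=
  \matrix_(i < r, j < r)
    (if i == j then - gam i else if j == i.+1 :> nat then 1 else 0).
Definition Bvec (R : realType) (r : nat) : 'cV[R]_r :=
  \col_(i < r) (if i == r.-1 :> nat then 1 else 0).
Definition Gam (R : realType) (r : nat) (gam : 'I_r -> R) : 'cV[R]_r :=
  - (invmx (Agam gam) *m Bvec R r).

(* Main.v *)
Require Import Defs.
From HB Require Import structures.
From mathcomp Require Import all_boot all_order all_algebra.
From mathcomp Require Import all_classical all_reals all_analysis.
Import Order.TTheory GRing.Theory Num.Theory.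
Import numFieldNormedType.Exports.
Local Open Scope classical_set_scope.
Local Open Scope ring_scope.
From mathcomp.algebra_tactics Require Import ring lra.
Set Implicit Arguments. Unset Strict Implicit. Unset Printing Implicit Defensive.

Section Norms.
Variable (R : realType) (k : nat).
Implicit Types u v w : 'cV[R]_k.

Lemma sumsq_ge0 v : 0 <= \sum_(i<k) v i 0 ^+ 2.
Proof. by apply: sumr_ge0 => i _; exact: sqr_ge0. Qed.

Lemma enorm_ge0 v : 0 <= enorm v.
Proof. exact: sqrtr_ge0. Qed.

Lemma enorm_sq v : enorm v ^+ 2 = \sum_(i<k) v i 0 ^+ 2.
Proof. by rewrite /enorm sqr_sqrtr // sumsq_ge0. Qed.

Lemma edot_sq v : edot v v = enorm v ^+ 2.
Proof. by rewrite enorm_sq /edot; apply: eq_bigr => i _; rewrite expr2. Qed.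

Lemma edotC u v : edot u v = edot v u.
Proof. by apply: eq_bigr => i _; rewrite mulrC. Qed.

Lemma edotDr u v w : edot u (v + w) = edot u v + edot u w.
Proof. by rewrite /edot -big_split; apply: eq_bigr => i _; rewrite mxE mulrDr. Qed.

Lemma edotZr u v (c : R) : edot u (c *: v) = c * edot u v.
Proof. by rewrite /edot mulr_sumr; apply: eq_bigr => i _; rewrite mxE mulrCA. Qed.

Lemma edotBr u v w : edot u (v - w) = edot u v - edot u w.
Proof.
rewrite /edot -sumrB; apply: eq_bigr => i _; rewrite !mxE; ring.
Qed.

Lemma edot_le2 u v : 2 * edot u v <= enorm u ^+ 2 + enorm v ^+ 2.
Proof.
rewrite !enorm_sq /edot mulr_sumr -big_split; apply: ler_sum => i _ /=.
have := sqr_ge0 (u i 0 - v i 0); nra.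
Qed.

Lemma enorm0P v : enorm v = 0 -> forall i, v i 0 = 0.
Proof.
move=> h i; have : enorm v ^+ 2 = 0 by rewrite h expr0n.
rewrite enorm_sq => /eqP; rewrite psumr_eq0 => [/allP /(_ i (mem_index_enum _))|j _].
  by rewrite implyTb sqrf_eq0 => /eqP.
exact: sqr_ge0.
Qed.

Lemma edot_CS u v : edot u v <= enorm u * enorm v.
Proof.
have [/enorm0P u0|] := eqVneq (enorm u) 0.
  rewrite /edot big1 ?mul0r ?mulr_ge0 ?enorm_ge0 // => i _; by rewrite u0 mul0r.
have [/enorm0P v0|] := eqVneq (enorm v) 0.
  rewrite /edot big1 ?mul0r ?mulr_ge0 ?enorm_ge0 // => i _; by rewrite v0 mulr0.
move=> nv nu.
have a0 : 0 < enorm u by rewrite lt_def nu enorm_ge0.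
have b0 : 0 < enorm v by rewrite lt_def nv enorm_ge0.
have := edot_le2 (enorm v *: u) (enorm u *: v).
have eZ : forall (c : R) w, enorm (c *: w) ^+ 2 = c ^+ 2 * enorm w ^+ 2.
  move=> c w; rewrite !enorm_sq mulr_sumr; apply: eq_bigr => i _; rewrite mxE; ring.
rewrite !eZ edotZr edotC edotZr edotC => h.
have hab : 0 < enorm u * enorm v by rewrite mulr_gt0.
suff : enorm u * enorm v * edot u v <= enorm u * enorm v * (enorm u * enorm v).
  by rewrite ler_pM2l.
nra.
Qed.

Lemma enormD u v : enorm (u + v) <= enorm u + enorm v.
Proof.
rewrite -ler_sqr ?nnegrE ?addr_ge0 ?enorm_ge0 //.
have edotDl : forall a b c : 'cV[R]_k, edot (a + b) c = edot a c + edot b c.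
  by move=> a b c; rewrite edotC edotDr !(edotC c).
rewrite -edot_sq edotDl !edotDr !edot_sq.
have := edot_CS u v; rewrite edotC => h.
have := enorm_ge0 u; have := enorm_ge0 v; nra.
Qed.

Lemma enormZ (c : R) v : enorm (c *: v) = `|c| * enorm v.
Proof.
rewrite /enorm -sqrtr_sqr -sqrtrM ?sqr_ge0 // mulr_sumr; congr Num.sqrt.
by apply: eq_bigr => i _; rewrite mxE exprMn.
Qed.

Lemma enormN v : enorm (- v) = enorm v.
Proof. by rewrite -scaleN1r enormZ normrN normr1 mul1r. Qed.

Lemma enormB u v : enorm (u - v) <= enorm u + enorm v.
Proof. by rewrite -(enormN v) enormD. Qed.

Lemma enorm_coord v i : `|v i 0| <= enorm v.
Proof.
rewrite -sqrtr_sqr ler_sqrt ?sumsq_ge0 // (bigD1 i) //= lerDl.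
by apply: sumr_ge0 => j _; exact: sqr_ge0.
Qed.

Lemma edot_abs u v : `|edot u v| <= enorm u * enorm v.
Proof.
rewrite ler_norml edot_CS andbT -(enormN u) lerNl.
have := edot_CS (- u) v.
suff -> : edot (- u) v = - edot u v by [].
by rewrite /edot -sumrN; apply: eq_bigr => i _; rewrite mxE mulNr.
Qed.

End Norms.


Section Agam.
Variables (R : realType) (r : nat) (gam : 'I_r -> R).

Lemma sum_if_eq (i : 'I_r) (c : R) : \sum_(j < r) (if i == j then c else 0) = c.
Proof.
rewrite (bigD1 i) //= eqxx big1 ?addr0 // => j /negbTE.
by rewrite eq_sym => ->.
Qed.

Lemma sum_atmost1 (P : pred 'I_r) (c : R) : 0 <= c ->
  (forall i j, P i -> P j -> i = j) -> \sum_(j < r) (if P j then c else 0) <= c.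
Proof.
move=> c0 uP; case: (pickP P) => [i0 Pi0|nP].
  rewrite (bigD1 i0) //= Pi0 big1 ?addr0 // => j ji0.
  case: ifP => // Pj; by move: ji0; rewrite (uP _ _ Pj Pi0) eqxx.
by rewrite big1 // => j _; rewrite nP.
Qed.

Lemma Agam_quad (g0 : R) (x : 'cV[R]_r) : (forall i, g0 <= gam i) ->
  edot x (Agam gam *m x) <= - (g0 - 1) * enorm x ^+ 2.
Proof.
move=> hg.
have -> : edot x (Agam gam *m x) = \sum_i \sum_j (x i 0 * Agam gam i j * x j 0).
  rewrite /edot; apply: eq_bigr => i _; rewrite mxE mulr_sumr.
  by apply: eq_bigr => j _; rewrite mulrA.
apply: (@le_trans _ _ (\sum_i \sum_j ((if i == j then - g0 * x i 0 ^+ 2 else 0)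
   + ((if (j : nat) == i.+1 then x i 0 ^+ 2 / 2 else 0)
   + (if (j : nat) == i.+1 then x j 0 ^+ 2 / 2 else 0))))).
  apply: ler_sum => i _; apply: ler_sum => j _; rewrite mxE.
  case: eqP => [<-|ij].
    rewrite (ltn_eqF (ltnSn i)) !addr0.
    have := hg i; have := sqr_ge0 (x i 0); nra.
  case: eqP => _; last by rewrite mulr0 mul0r !addr0.
  rewrite mulr1 add0r.
  have := sqr_ge0 (x i 0 - x j 0); nra.
under eq_bigr do rewrite big_split /= sum_if_eq big_split /=.
rewrite big_split /= big_split /=.
have h1 : \sum_(i < r) \sum_(j < r) (if (j : nat) == i.+1 then x i 0 ^+ 2 / 2 else 0)
   <= \sum_(i < r) x i 0 ^+ 2 / 2.
  apply: ler_sum => i _; apply: (@sum_atmost1 (fun j : 'I_r => (j : nat) == i.+1)).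
    by apply: divr_ge0 => //; exact: sqr_ge0.
  by move=> a b /eqP ha /eqP hb; apply: val_inj; rewrite /= ha hb.
have h2 : \sum_(i < r) \sum_(j < r) (if (j : nat) == i.+1 then x j 0 ^+ 2 / 2 else 0)
   <= \sum_(j < r) x j 0 ^+ 2 / 2.
  rewrite exchange_big /=.
  apply: ler_sum => j _; apply: (@sum_atmost1 (fun i : 'I_r => (j : nat) == i.+1)).
    by apply: divr_ge0 => //; exact: sqr_ge0.
  move=> a b /eqP ha /eqP hb; apply: val_inj.
  by move: ha; rewrite hb => /eqP; rewrite eqSS => /eqP.
have e1 : \sum_(i < r) - g0 * x i 0 ^+ 2 = - g0 * enorm x ^+ 2.
  by rewrite enorm_sq mulr_sumr.
have e2 : \sum_(i < r) x i 0 ^+ 2 / 2 = enorm x ^+ 2 / 2.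
  by rewrite enorm_sq mulr_suml.
rewrite e1 in h1 h2 *; rewrite e2 in h1 h2.
lra.
Qed.

Lemma Agam_unit : (forall i, 0 < gam i) -> Agam gam \in unitmx.
Proof.
move=> hg; rewrite unitmxE -det_tr det_trig.
  rewrite unitfE; apply/prodf_neq0 => i _; rewrite !mxE eqxx oppr_eq0.
  by rewrite gt_eqF.
apply/is_trig_mxP => i j ij; rewrite !mxE.
rewrite ifF; last by apply/negP => /eqP ji; move: ij; rewrite ji ltnn.
rewrite ifF //.
apply/negbTE; rewrite neq_ltn; apply/orP; left.
by rewrite (leq_trans ij).
Qed.

Lemma AGam : (forall i, 0 < gam i) -> Agam gam *m Gam gam = - Bvec R r.
Proof.
move=> hg; rewrite /Gam mulmxN mulmxA mulmxV ?mul1mx //; exact: Agam_unit.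
Qed.

Lemma enormB1 : enorm (Bvec R r) <= 1.
Proof.
have h : enorm (Bvec R r) ^+ 2 <= 1.
  rewrite enorm_sq.
  have -> : \sum_(i < r) Bvec R r i 0 ^+ 2 =
            \sum_(i < r) (if (i : nat) == r.-1 then 1 else 0).
    by apply: eq_bigr => i _; rewrite mxE; case: ifP; rewrite ?expr1n ?expr0n.
  apply: sum_atmost1 => // a b /eqP ha /eqP hb; apply: val_inj; by rewrite /= ha hb.
have := enorm_ge0 (Bvec R r); nra.
Qed.

Lemma Gam_bound (g0 : R) : 1 < g0 -> (forall i, g0 <= gam i) ->
  enorm (Gam gam) <= (g0 - 1)^-1.
Proof.
move=> g1 hg.
have hg0 : forall i, 0 < gam i by move=> i; apply: lt_le_trans (hg i); lra.
have q := Agam_quad (Gam gam) hg.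
rewrite AGam // -scaleN1r edotZr in q.
have := edot_CS (Gam gam) (Bvec R r).
have := enormB1; have := enorm_ge0 (Gam gam); have := enorm_ge0 (Bvec R r).
set G := enorm (Gam gam); set b := enorm (Bvec R r); set d := edot _ _ => hb0 hG hb1 hd.
have gp : 0 < g0 - 1 by lra.
suff h : (g0 - 1) * G <= 1.
  by rewrite -(ler_pM2l gp) mulrV ?unitf_gt0.
move: q; rewrite -/d -/G => q.
have hGb : G * b <= G by nra.
have : (g0 - 1) * G ^+ 2 <= G by lra.
nra.
Qed.

End Agam.


Lemma is_derive_expl (R : realType) (eps t : R) :
  is_derive t 1 (fun s : R => expR (eps * s)) (expR (eps * t) * eps).
Proof.
have hg : is_derive t 1 (fun s : R => eps * s) eps.
  have := @is_deriveZ R R R id eps t 1 1 _.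
  move=> /(_ (is_derive_id _ _)); rewrite [eps%:A]mulr1; exact.
exact: (@is_derive1_comp R expR (fun s => eps * s) t (expR (eps * t)) eps).
Qed.

Lemma gronwall (R : realType) (W : R -> R) (eps : R) :
  (forall t, 0 < t -> derivable W t 1 /\ derive1 W t <= - eps * W t) ->
  W x @[x --> 0^'+] --> W 0 ->
  forall t, 0 <= t -> expR (eps * t) * W t <= W 0.
Proof.
move=> hW hW0 t t0.
pose U := fun s => expR (eps * s) * W s.
have dU : forall s : R, 0 < s -> is_derive s 1 U
   (expR (eps * s) * derive1 W s + W s * (expR (eps * s) * eps)).
  move=> s s0; have [d _] := hW s s0.
  have hW' : is_derive s 1 W (derive1 W s) by rewrite derive1E; exact: derivableP.
  have := @is_deriveM R R (fun s => expR (eps * s)) W s 1 _ _ (is_derive_expl eps s) hW'.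
  done.
suff : U t <= U 0 by rewrite /U mulr0 expR0 mul1r.
apply: (@ler0_derive1_nincry R U 0) => //.
- move=> x; rewrite in_itv /= andbT => x0; have := dU x x0; by case.
- move=> x; rewrite in_itv /= andbT => x0.
  rewrite derive1E (@derive_val _ _ _ _ _ _ _ (dU x x0)).
  have [_ h] := hW x x0.
  have := expR_gt0 (eps * x); nra.
- apply/continuous_within_itvcyP; split.
    move=> x; rewrite in_itv /= andbT => x0.
    apply/differentiable_continuous/derivable1_diffP; have := dU x x0; by case.
  apply: cvgM => //.
  apply: cvg_within_filter.
  apply: continuous_comp; last exact: continuous_expR.
  by apply: cvgMr; exact: cvg_id.
Qed.

Lemma deriv_Veta (R : realType) (m : nat) (V : 'cV[R]_m -> R) (eta : R -> 'cV[R]_m) (t : R) :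
  differentiable V (eta t) -> derivable eta t 1 ->
  is_derive t 1 (V \o eta) ('d V (eta t) ('D_1 eta t)).
Proof.
move=> dV de; have de' : differentiable eta t by apply/derivable1_diffP.
apply: DeriveDef.
  by apply/derivable1_diffP; apply: differentiable_comp.
rewrite deriveE; last by apply: differentiable_comp.
by rewrite diff_comp // [in RHS]deriveE.
Qed.

Lemma sumsq_derive (R : realType) (m : nat) (psi : R -> 'cV[R]_m) (t : R) :
  derivable psi t 1 ->
  is_derive t 1 (fun s => \sum_(i < m) psi s i 0 ^+ 2) (2 * edot (psi t) ('D_1 psi t)).
Proof.
move=> d.
have di : forall i, is_derive t 1 (fun s => psi s i 0) ('D_1 psi t i 0).
  move=> i; rewrite derive_mx // mxE; apply: derivableP.
  by move/derivable_mxP : d => /(_ i 0).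
have hs : forall i : 'I_m, is_derive t 1 ((fun s => psi s i 0) * (fun s => psi s i 0))
   (psi t i 0 * 'D_1 psi t i 0 + psi t i 0 * 'D_1 psi t i 0).
  by move=> i; exact: (is_deriveM (di i) (di i)).
have := is_derive_sum hs.
have -> : (\sum_(i < m) ((fun s => psi s i 0) * (fun s => psi s i 0))) =
          (fun s => \sum_(i < m) psi s i 0 ^+ 2).
  rewrite fct_sumE; apply/funext => s; apply: eq_bigr => i _; by rewrite /= expr2.
move=> h; apply: is_derive_eq h _.
rewrite /edot mulr_sumr; apply: eq_bigr => i _; ring.
Qed.


Lemma key_ineq (R : realType) (a2 a3 a4 lphi lkap K G x y D W : R) :
  0 < a2 -> 0 < a3 -> 0 < a4 -> 0 <= lphi -> 0 <= lkap -> 0 <= x -> 0 <= y ->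
  0 <= G -> G * K <= 1 -> 0 < K ->
  2 * a3 * lphi * lkap <= a4 * K ->
  (a3 * lphi + 2 * lkap) ^+ 2 <= a4 * K -> a4 <= K ->
  D <= - a4 * x ^+ 2 + a3 * x * lphi * (y + lkap * G * x) - 2 * K * y ^+ 2
       + 2 * lkap * x * y ->
  W <= a2 * x ^+ 2 + y ^+ 2 ->
  D <= - (a4 / (4 * (a2 + 1))) * W.
Proof.
move=> a20 a30 a40 lp0 lk0 x0 y0 G0 GK K0 h1 h2 h3 hD hW.
set c1 := a3 * lphi + 2 * lkap.
have p0 : 0 <= a3 * lphi * lkap by rewrite !mulr_ge0 // ltW.
have e1 : 2 * a3 * lphi * lkap * G <= a4.
  have : 2 * a3 * lphi * lkap * G <= a4 * K * G by rewrite ler_wpM2r.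
  nra.
have e2 : a3 * lphi * lkap * G * x ^+ 2 <= a4 / 2 * x ^+ 2.
  rewrite ler_wpM2r ?sqr_ge0 //; lra.
have e3 : a4 * (c1 * x * y) <= a4 ^+ 2 / 4 * x ^+ 2 + c1 ^+ 2 * y ^+ 2.
  have := sqr_ge0 (a4 / 2 * x - c1 * y); nra.
have e4 : c1 ^+ 2 * y ^+ 2 <= a4 * K * y ^+ 2 by rewrite ler_wpM2r ?sqr_ge0.
have e5 : c1 * x * y <= a4 / 4 * x ^+ 2 + K * y ^+ 2.
  have : a4 * (c1 * x * y) <= a4 * (a4 / 4 * x ^+ 2 + K * y ^+ 2).
    apply: (le_trans e3); rewrite mulrDr; nra.
  by rewrite ler_pM2l.
have e6 : D <= - (a4 / 4) * (x ^+ 2 + y ^+ 2).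
  have : D <= - a4 * x ^+ 2 + a3 * lphi * lkap * G * x ^+ 2 + c1 * x * y
              - 2 * K * y ^+ 2.
    apply: (le_trans hD); rewrite /c1 le_eqVlt; apply/orP; left; apply/eqP; ring.
  have := sqr_ge0 y; nra.
have a21 : 0 < a2 + 1 by lra.
have e7 : W <= (a2 + 1) * (x ^+ 2 + y ^+ 2).
  have := sqr_ge0 x; have := sqr_ge0 y; nra.
apply: (le_trans e6).
rewrite mulNr mulNr lerN2.
have -> : a4 / (4 * (a2 + 1)) * W = (a4 / 4) * (W / (a2 + 1)).
  by field; lra.
rewrite ler_wpM2l //; first by lra.
by rewrite ler_pdivrMr // mulrC.
Qed.


Lemma normr_le_enorm (R : realType) m (v : 'cV[R]_m) : `|v| <= enorm v.
Proof.
rewrite [leLHS]/Num.Def.normr /= mx_normrE.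
apply: bigmax_le => [|ij _]; first exact: enorm_ge0.
by case: ij => i j /=; rewrite (ord1 j); exact: enorm_coord.
Qed.

Lemma sq_cont (R : realType) m (c : 'cV[R]_m) :
  continuous (fun p : 'cV[R]_m => \sum_(i < m) (p - c) i 0 ^+ 2).
Proof.
move=> p; apply: differentiable_continuous.
have -> : (fun p : 'cV[R]_m => \sum_(i < m) (p - c) i 0 ^+ 2) =
   \sum_(i < m) ((fun p : 'cV[R]_m => p i 0) \- cst (c i 0)) ^+ 2.
  rewrite fct_sumE; apply/funext => z; apply: eq_bigr => i _.
  by rewrite !mxE.
apply: differentiable_sum => i.
apply: differentiableX; apply: differentiableB; first exact: differentiable_coord.
exact: differentiable_cst.
Qed.

Lemma conv_helper (R : realType) (m : nat) (f : R -> 'cV[R]_m) (l : 'cV[R]_m)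
  (c C eps : R) : 0 < c -> 0 < eps -> 0 <= C ->
  (forall t, 0 <= t -> (1 + eps * t) * (c * enorm (f t - l) ^+ 2) <= C) ->
  f t @[t --> +oo] --> l.
Proof.
move=> c0 e0 C0 h; apply/cvgrPdist_lt => e ep.
have e2 : 0 < c * eps * e ^+ 2 by rewrite !mulr_gt0 // exprn_gt0.
have : \forall s \near +oo, C / (c * eps * e ^+ 2) < s.
  by apply: nbhs_pinfty_gt; rewrite num_real.
apply: filterS => s Ts.
have T0 : 0 <= C / (c * eps * e ^+ 2) by rewrite divr_ge0 // ltW.
have s0 : 0 <= s by apply: ltW; apply: le_lt_trans Ts.
move: Ts; rewrite ltr_pdivrMr // => Ts.
have hs := h s s0.
set z := enorm (f s - l) in hs.
have z0 : 0 <= z := enorm_ge0 _.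
have es : 0 < 1 + eps * s by have := mulr_ge0 (ltW e0) s0; lra.
have : c * z ^+ 2 * (1 + eps * s) < c * e ^+ 2 * (1 + eps * s).
  have : c * e ^+ 2 * (eps * s) <= c * e ^+ 2 * (1 + eps * s).
    rewrite ler_wpM2l ?mulr_ge0 ?sqr_ge0 ?ltW //; lra.
  nra.
rewrite ltr_pM2r // ltr_pM2l // => hz.
apply: (le_lt_trans (normr_le_enorm _)).
rewrite -opprB enormN -/z.
by rewrite -(ltr_pXn2r (n := 2)) // ?nnegrE ?ltW.
Qed.

Unset Implicit Arguments. Set Strict Implicit.

Theorem theorem6 (R : realType) (n r : nat) (a1 a2 a3 a4 lphi Leta lkap : R) :
  (0 < r)%N -> (r < n)%N ->
  0 < a1 -> 0 < a2 -> 0 < a3 -> 0 < a4 -> 0 <= lphi -> 0 <= Leta -> 0 <= lkap ->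
  (a3 * lphi / 2) ^+ 2 < a4 ->
  exists gam0 : R, 0 < gam0 /\
  forall (gam : 'I_r -> R), (forall i, gam0 <= gam i) ->
  forall (q : 'cV[R]_(n - r) -> 'cV[R]_r -> 'cV[R]_(n - r))
         (kap : 'cV[R]_(n - r) -> R) (V : 'cV[R]_(n - r) -> R)
         (gV : 'cV[R]_(n - r) -> 'cV[R]_(n - r)) (eta_e : 'cV[R]_(n - r)),
  (* q_cbf Lipschitz in eta (constant Leta) and in phi (constant lphi) *)
  (forall e1 e2 p, enorm (q e1 p - q e2 p) <= Leta * enorm (e1 - e2)) ->
  (forall e p1 p2, enorm (q e p1 - q e p2) <= lphi * enorm (p1 - p2)) ->
  (* kappa_ps Lipschitz, nonnegative *)
  (forall e1 e2, `|kap e1 - kap e2| <= lkap * enorm (e1 - e2)) ->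
  (forall e, 0 <= kap e) ->
  (* eta_e is an equilibrium of eta' = q(eta, Gamma kappa(eta)) *)
  q eta_e (kap eta_e *: Gam gam) = 0 ->
  (* Lyapunov function V with gradient gV *)
  (forall e, differentiable V e) ->
  (forall e w, 'd V e w = edot (gV e) w) ->
  (forall e, a1 * enorm (e - eta_e) ^+ 2 <= V e) ->
  (forall e, V e <= a2 * enorm (e - eta_e) ^+ 2) ->
  (forall e, enorm (gV e) <= a3 * enorm (e - eta_e)) ->
  (forall e, edot (gV e) (q e (kap e *: Gam gam)) <= - a4 * enorm (e - eta_e) ^+ 2) ->
  (* any solution of the closed loop with mu(t) = kappa(eta(t)), phi(0) in S_phi *)
  forall (phi : R -> 'cV[R]_r) (eta : R -> 'cV[R]_(n - r)),
  (forall i, 0 <= phi 0 i 0) ->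
  {within [set t : R | 0 <= t], continuous (fun t => (phi t, eta t))} ->
  (forall t, 0 < t -> derivable phi t 1 /\
     derive1 phi t = Agam gam *m phi t + kap (eta t) *: Bvec R r) ->
  (forall t, 0 < t -> derivable eta t 1 /\ derive1 eta t = q (eta t) (phi t)) ->
  (phi t @[t --> +oo] --> kap eta_e *: Gam gam) /\
  (eta t @[t --> +oo] --> eta_e) /\
  (exists M : R, forall t, 0 <= t -> enorm (phi t) + enorm (eta t) <= M).
Proof.
move=> r0 rn a10 a20 a30 a40 lp0 le0 lk0 _.
set c1 := a3 * lphi + 2 * lkap.
have p0 : 0 <= 2 * a3 * lphi * lkap by rewrite !mulr_ge0 // ltW.
set K := 1 + a4 + (2 * a3 * lphi * lkap + c1 ^+ 2) / a4.
have hKa : a4 * K = a4 + a4 ^+ 2 + (2 * a3 * lphi * lkap + c1 ^+ 2).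
  by rewrite /K; field; rewrite gt_eqF.
have c0 : 0 <= c1 ^+ 2 := sqr_ge0 _.
have hd : 0 <= (2 * a3 * lphi * lkap + c1 ^+ 2) / a4 by rewrite divr_ge0 // ?addr_ge0 // ltW.
have hK1 : 2 * a3 * lphi * lkap <= a4 * K by rewrite hKa; nra.
have hK2 : c1 ^+ 2 <= a4 * K by rewrite hKa; nra.
have hK3 : a4 <= K by rewrite /K; lra.
have K0 : 0 < K by rewrite /K; lra.
exists (K + 1); split; first lra.
move=> gam hgam q kap V gV eta_e qL1 qL2 kL k0 qe dV dVE Vlo Vhi gVb Vdec
  phi eta phi0 hc hphi heta.
have g1 : 1 < K + 1 by lra.
have Gb : enorm (Gam gam) <= K^-1.
  by have := Gam_bound g1 hgam; rewrite addrK.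
have Aq : forall x, edot x (Agam gam *m x) <= - K * enorm x ^+ 2.
  by move=> x; have := Agam_quad x hgam; rewrite addrK.
have gpos : forall i, 0 < gam i by move=> i; apply: lt_le_trans (hgam i); lra.
set pe := kap eta_e *: Gam gam.
pose psi := fun s => phi s - pe.
pose W := fun s => V (eta s) + \sum_(i < r) psi s i 0 ^+ 2.
set eps := a4 / (4 * (a2 + 1)).
have eps0 : 0 < eps by rewrite divr_gt0 // mulr_gt0 //; lra.
have Wge : forall s, a1 * enorm (eta s - eta_e) ^+ 2 + enorm (psi s) ^+ 2 <= W s.
  by move=> s; rewrite /W /= [enorm (psi s) ^+ 2]enorm_sq lerD2r.
have Wle : forall s, W s <= a2 * enorm (eta s - eta_e) ^+ 2 + enorm (psi s) ^+ 2.
  by move=> s; rewrite /W /= [enorm (psi s) ^+ 2]enorm_sq lerD2r.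
have W0 : forall s, 0 <= W s.
  move=> s; apply: le_trans (Wge s).
  by rewrite addr_ge0 ?sqr_ge0 // mulr_ge0 ?sqr_ge0 // ltW.
have dW : forall s, 0 < s -> derivable W s 1 /\ derive1 W s <= - eps * W s.
  move=> s s0; have [dphi ephi] := hphi s s0; have [deta eeta] := heta s s0.
  have hpsi : is_derive s 1 psi (derive1 phi s).
    have h := is_deriveB (derivableP dphi) (is_derive_cst pe s 1).
    rewrite subr0 -derive1E in h; exact: h.
  have dpsi : derivable psi s 1 by case: hpsi.
  have h1 := deriv_Veta (dV (eta s)) deta.
  have h2 := sumsq_derive dpsi.
  have hWd := is_deriveD h1 h2.
  have eD : 'D_1 psi s = derive1 phi s by case: hpsi.
  have eW : derive1 W s = edot (gV (eta s)) (q (eta s) (phi s))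
                          + 2 * edot (psi s) (derive1 phi s).
    rewrite derive1E.
    have -> : 'D_1 W s = 'd V (eta s) ('D_1 eta s) + 2 * edot (psi s) ('D_1 psi s).
      exact: (@derive_val _ _ _ _ _ _ _ hWd).
    by rewrite dVE eD -derive1E eeta.
  split; first by case: hWd.
  rewrite eW.
  set x := enorm (eta s - eta_e); set y := enorm (psi s).
  have x0 : 0 <= x := enorm_ge0 _.
  have y0 : 0 <= y := enorm_ge0 _.
  set G := enorm (Gam gam).
  have G0 : 0 <= G := enorm_ge0 _.
  have GK : G * K <= 1.
    by move: Gb; rewrite -/G -ler_pdivlMr // div1r.
  have fA : edot (gV (eta s)) (q (eta s) (phi s)) <=
            - a4 * x ^+ 2 + a3 * x * (lphi * (y + lkap * G * x)).
    set k := kap (eta s) *: Gam gam.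
    have -> : q (eta s) (phi s) = q (eta s) k + (q (eta s) (phi s) - q (eta s) k).
      by rewrite addrC subrK.
    rewrite edotDr; apply: lerD; first exact: Vdec.
    apply: le_trans (edot_CS _ _) _.
    apply: ler_pM; [exact: enorm_ge0 | exact: enorm_ge0 | exact: gVb | ].
    apply: le_trans (qL2 _ _ _) _.
    apply: ler_wpM2l => //.
    have -> : phi s - k = psi s + (kap eta_e - kap (eta s)) *: Gam gam.
      by rewrite /psi /k /pe scalerBl addrA subrK.
    apply: le_trans (enormD _ _) _; rewrite lerD2l enormZ -/G.
    rewrite [lkap * G * x]mulrAC; apply: ler_wpM2r => //.
    by rewrite distrC; exact: kL.
  have eA : Agam gam *m phi s + kap (eta s) *: Bvec R r =
            Agam gam *m psi s + (kap (eta s) - kap eta_e) *: Bvec R r.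
    rewrite /psi mulmxBr /pe -scalemxAr AGam // scalerN scalerBl.
    by rewrite opprK -addrA [kap eta_e *: _ + _]addrC subrK.
  have fB : edot (psi s) (derive1 phi s) <= - K * y ^+ 2 + lkap * x * y.
    rewrite ephi eA edotDr; apply: lerD; first exact: Aq.
    rewrite edotZr; apply: le_trans (ler_norm _) _; rewrite normrM.
    apply: ler_pM; [exact: normr_ge0 | exact: normr_ge0 | exact: kL | ].
    apply: le_trans (edot_abs _ _) _.
    rewrite -/y -[leRHS]mulr1; apply: ler_wpM2l => //; exact: enormB1.
  have hD : edot (gV (eta s)) (q (eta s) (phi s)) + 2 * edot (psi s) (derive1 phi s)
     <= - a4 * x ^+ 2 + a3 * x * lphi * (y + lkap * G * x) - 2 * K * y ^+ 2
       + 2 * lkap * x * y.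
    have e : a3 * x * lphi * (y + lkap * G * x) = a3 * x * (lphi * (y + lkap * G * x)).
      by ring.
    rewrite e; lra.
  exact: (key_ineq a20 a30 a40 lp0 lk0 x0 y0 G0 GK K0 hK1 hK2 hK3 hD (Wle s)).
have hW0 : W x @[x --> 0^'+] --> W 0.
  have hp : (fun t => (phi t, eta t)) @ 0^'+ --> (phi 0, eta 0).
    have h := (@subspace_continuousP _ [set t : R | 0 <= t] _ (fun t => (phi t, eta t))).1 hc 0 (lexx 0).
    apply: cvg_trans h; apply: cvg_app.
    apply: within_subset => z /= z0; exact: ltW.
  have he : eta t @[t --> 0^'+] --> eta 0.
    exact: (cvg_comp _ _ hp cvg_snd).
  have hph : phi t @[t --> 0^'+] --> phi 0.
    exact: (cvg_comp _ _ hp cvg_fst).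
  apply: cvgD.
    exact: (cvg_comp _ _ he (differentiable_continuous (dV (eta 0)))).
  rewrite /psi /=; exact: (cvg_comp _ _ hph (@sq_cont _ _ pe (phi 0))).
have gr := gronwall dW hW0.
have gr2 : forall t, 0 <= t -> (1 + eps * t) * W t <= W 0.
  move=> t t0; apply: le_trans (gr t t0).
  by rewrite ler_wpM2r // expR_ge1Dx.
have gr3 : forall t, 0 <= t -> W t <= W 0.
  move=> t t0; apply: le_trans (gr2 t t0).
  have := mulr_ge0 (ltW eps0) t0; have := W0 t; nra.
split; last split.
- apply: (@conv_helper R r phi pe 1 (W 0) eps ltr01 eps0 (W0 0)).
  move=> t t0; apply: le_trans (gr2 t t0); rewrite mul1r ler_wpM2l //.
    by have := mulr_ge0 (ltW eps0) t0; lra.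
  have := Wge t; have := sqr_ge0 (enorm (eta t - eta_e)); rewrite /psi; nra.
- apply: (@conv_helper R (n - r) eta eta_e a1 (W 0) eps a10 eps0 (W0 0)).
  move=> t t0; apply: le_trans (gr2 t t0); rewrite ler_wpM2l //.
    by have := mulr_ge0 (ltW eps0) t0; lra.
  have := Wge t; have := sqr_ge0 (enorm (psi t)); nra.
- exists (2 + W 0 / a1 + W 0 + enorm pe + enorm eta_e) => t t0.
  have h1 : enorm (phi t) <= enorm (psi t) + enorm pe.
    by rewrite -(subrK pe (phi t)) enormD.
  have h2 : enorm (eta t) <= enorm (eta t - eta_e) + enorm eta_e.
    by rewrite -{1}(subrK eta_e (eta t)) enormD.
  have hw := gr3 t t0; have := Wge t.
  set x := enorm (eta t - eta_e); set y := enorm (psi t) => hg.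
  have x0 : 0 <= x := enorm_ge0 _.
  have y0 : 0 <= y := enorm_ge0 _.
  have hx : x ^+ 2 <= W 0 / a1.
    rewrite ler_pdivlMr // mulrC; have := sqr_ge0 y; lra.
  have hy : y ^+ 2 <= W 0 by have := mulr_ge0 (ltW a10) (sqr_ge0 x); lra.
  have : x <= 1 + x ^+ 2 by nra.
  have : y <= 1 + y ^+ 2 by nra.
  move=> ha hb; move: h1 h2; rewrite -/x -/y => h1 h2; lra.
Qed.
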